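(* Let $K$ be a field and $X$ a finite connected poset. The kernel $N=\{\varphi\in\mathrm{LAut}(I(X,K)): \widetilde\varphi=\mathrm{id}\}$ of the homomorphism $\varphi\mapsto\widetilde\varphi$ coincides with $\mathrm{Inn}_1(I(X,K))$, the group of conjugations $f\mapsto\beta f\beta^{-1}$ by elements $\beta\in I(X,K)$ with $\beta(x,x)=1$ for all $x\in X$.
   Context: $I(X,K)$ is the incidence algebra: functions $f:X\times X\to K$ with $f(x,y)=0$ unless $x\le y$, product $(fg)(x,y)=\sum_{x\le t\le y}f(x,t)g(t,y)$; $e_{xy}$ ($x\le y$) is the basis element equal to $1$ at $(x,y)$ and $0$ elsewhere. $\mathrm{LAut}(I(X,K))$ is the group of bijective linear maps preserving $[f,g]=fg-gf$. Let $l(\lfloor x,y\rfloor)$ be the maximum length of a chain in $\{z:x\le z\le y\}$, $L_i=\mathrm{span}_K\{e_{xy}: l(\lfloor x,y\rfloor)=i\}$ ($i\ge0$). For $\varphi\in\mathrm{LAut}(I(X,K))$, $\widetilde\varphi$ is the linear map sending $e_{xy}\in L_i$ to the $L_i$-component of $\varphi(e_{xy})$ in $I(X,K)=\bigoplus_iL_i$. Connected means any two elements are joined by a sequence in which consecutive elements are in a covering relation. *)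

(* Defs.v *)
From HB Require Import structures.
From mathcomp Require Import all_boot all_order all_algebra.
Set Implicit Arguments. Unset Strict Implicit. Unset Printing Implicit Defensive.
Import Order.POrderTheory GRing.Theory.

Local Open Scope order_scope.

Notation IFun X K := {ffun X * X -> K} (only parsing).

Section Incidence.
Variables (d : Order.disp_t) (X : finPOrderType d) (K : fieldType).

Definition leI (a b : X) : bool := (a <= b)%O.


Definition incid (f : IFun X K) : Prop :=
  forall x y : X, ~~ (x <= y) -> f (x, y) = 0%R.

Definition conv (f g : IFun X K) : IFun X K :=
  [ffun p : X * X => (\sum_(t : X | leI p.1 t && leI t p.2)
                         f (p.1, t) * g (t, p.2))%R].

Definition lie (f g : IFun X K) : IFun X K := (conv f g - conv g f)%R.

Definition idI : IFun X K := [ffun p : X * X => if p.1 == p.2 then 1%R else 0%R].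

Definition eI (u v : X) : IFun X K := [ffun p : X * X => if p == (u, v) then 1%R else 0%R].

(* Lie automorphisms of I(X,K): bijective linear maps of I(X,K)
   preserving the commutator; only the values on I(X,K) matter. *)
Definition LAut (phi : IFun X K -> IFun X K) : Prop :=
  [/\ (forall f, incid f -> incid (phi f)),
      (forall (a : K) f g, incid f -> incid g ->
          phi [ffun p => (a * f p + g p)%R] = [ffun p => (a * phi f p + phi g p)%R]),
      (forall f g, incid f -> incid g -> phi f = phi g -> f = g),
      (forall g, incid g -> exists2 f, incid f & phi f = g) &
      (forall f g, incid f -> incid g -> phi (lie f g) = lie (phi f) (phi g))].

(* l(floor x,y ceil): maximum length of a chain in [x,y]; a maximal chain
   contains x and y, so it is the maximal n such that there is a strictly
   increasing path x < x_1 < ... < x_n = y (n <= #|X| always). *)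
Definition ilen (x y : X) : nat :=
  \max_(n < #|X|.+1 | [exists t : n.-tuple X,
           path (fun a b : X => a < b) x t && (last x t == y)]) n.

Definition compL (i : nat) (g : IFun X K) : IFun X K :=
  [ffun p : X * X => if leI p.1 p.2 && (ilen p.1 p.2 == i)%N then g p else 0%R].

(* phi~ : linear map sending e_{xy} in L_i to the L_i-component of phi(e_{xy}) *)
Definition tilde (phi : IFun X K -> IFun X K) (f : IFun X K) : IFun X K :=
  [ffun q : X * X => (\sum_(p : X * X | leI p.1 p.2)
       f p * compL (ilen p.1 p.2) (phi (eI p.1 p.2)) q)%R].

Definition Inn1 (phi : IFun X K -> IFun X K) : Prop :=
  exists beta binv : IFun X K,
    [/\ incid beta, incid binv, (forall x : X, beta (x, x) = 1%R),
        conv beta binv = idI /\ conv binv beta = idI &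
        (forall f, incid f -> phi f = conv (conv beta f) binv)].

Definition covers (a b : X) : bool :=
  (a < b) && [forall z : X, ~~ ((a < z) && (z < b))].

Definition connected_poset : Prop :=
  forall x y : X, exists s : seq X,
    path (fun a b : X => covers a b || covers b a) x s /\ last x s = y.

End Incidence.

(* Main.v *)
Require Import Defs.
From HB Require Import structures.
From mathcomp Require Import all_boot all_order all_algebra.
Set Implicit Arguments. Unset Strict Implicit. Unset Printing Implicit Defensive.
Import Order.POrderTheory GRing.Theory.
Local Open Scope ring_scope.

Lemma incid_conv d (X : finPOrderType d) (K : fieldType) (f g : IFun X K) :
  incid (conv f g).
Proof.
move=> x y H; rewrite ffunE big_pred0 // => t /=.
apply/negbTE; apply: contra H => /andP[a b]; exact: le_trans a b.
Qed.

Lemma convE d (X : finPOrderType d) (K : fieldType) (f g : IFun X K) p :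
  incid f -> incid g -> conv f g p = \sum_t f (p.1, t) * g (t, p.2).
Proof.
move=> hf hg; rewrite ffunE [RHS](bigID (fun t => leI p.1 t && leI t p.2)) /=.
rewrite [X in _ = _ + X]big1 ?addr0 // => t; case/nandP => [h|h].
  by rewrite hf // mul0r.
by rewrite hg // mulr0.
Qed.

Definition Mx d (X : finPOrderType d) (K : fieldType) (f : IFun X K) : 'M[K]_#|X| :=
  \matrix_(i, j) f (enum_val i, enum_val j).

Lemma Mx_conv d (X : finPOrderType d) (K : fieldType) (f g : IFun X K) :
  incid f -> incid g -> Mx (conv f g) = Mx f *m Mx g.
Proof.
move=> hf hg; apply/matrixP => i j; rewrite !mxE convE //=.
rewrite (reindex (@enum_val X (mem predT))) /=; last first.
  by apply: onW_bij; exists enum_rank => z; [rewrite enum_valK | rewrite enum_rankK].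
by apply: eq_bigr => k _; rewrite !mxE.
Qed.

Lemma Mx_inj d (X : finPOrderType d) (K : fieldType) (f g : IFun X K) :
  Mx f = Mx g -> f = g.
Proof.
move=> H; apply/ffunP => -[x y].
have := congr1 (fun A : 'M_ _ => A (enum_rank x) (enum_rank y)) H.
by rewrite !mxE !enum_rankK.
Qed.

Lemma Mx_id d (X : finPOrderType d) (K : fieldType) : Mx (idI X K) = 1%:M.
Proof.
apply/matrixP => i j; rewrite !mxE ffunE /=.
by rewrite (inj_eq enum_val_inj); case: eqP.
Qed.

Lemma Mx_lin d (X : finPOrderType d) (K : fieldType) (a : K) (f g : IFun X K) :
  Mx [ffun p => a * f p + g p] = a *: Mx f + Mx g.
Proof. by apply/matrixP => i j; rewrite !mxE ffunE. Qed.

Lemma Mx_sub d (X : finPOrderType d) (K : fieldType) (f g : IFun X K) :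
  Mx (f - g) = Mx f - Mx g.
Proof. by apply/matrixP => i j; rewrite !mxE !ffunE. Qed.

Lemma Mx_lie d (X : finPOrderType d) (K : fieldType) (f g : IFun X K) :
  incid f -> incid g -> Mx (lie f g) = Mx f *m Mx g - Mx g *m Mx f.
Proof. by move=> hf hg; rewrite /lie Mx_sub !Mx_conv. Qed.

Lemma incid_lin d (X : finPOrderType d) (K : fieldType) (a : K) (f g : IFun X K) :
  incid f -> incid g -> incid [ffun p => a * f p + g p].
Proof. by move=> hf hg x y h; rewrite ffunE hf // hg // mulr0 addr0. Qed.

Lemma ffsubE (T : finType) (K : fieldType) (f g : {ffun T -> K}) x :
  (f - g) x = f x - g x.
Proof. by rewrite !ffunE. Qed.

Lemma incid_lie d (X : finPOrderType d) (K : fieldType) (f g : IFun X K) :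
  incid (lie f g).
Proof. by move=> x y h; rewrite /lie ffsubE !incid_conv // subrr. Qed.
Lemma path_lt_last d (X : finPOrderType d) (x : X) s :
  path (fun a b : X => (a < b)%O) x s -> s != [::] -> (x < last x s)%O.
Proof.
elim: s x => [//|y s IH] x /= /andP[hxy hp] _.
case: s IH hp => [|z s] IH hp //=.
by apply: lt_trans hxy _; apply: IH hp _.
Qed.

Lemma ilen_diag d (X : finPOrderType d) (x : X) : ilen x x = 0.
Proof.
apply/eqP; rewrite -leqn0; apply/bigmax_leqP => i /existsP [t /andP[hp /eqP hl]].
have hs := size_tuple t.
case: (tval t) hs hp hl => [|z s] /= hs hp hl; first by rewrite -hs.
have := @path_lt_last _ _ x (z :: s) hp; rewrite /= hl ltxx; by move=> /(_ isT).
Qed.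

Lemma ilen_wit d (X : finPOrderType d) (x y : X) : (x <= y)%O ->
  exists t : seq X, [/\ path (fun a b : X => (a < b)%O) x t, last x t = y &
     size t = ilen x y].
Proof.
move=> hxy.
set P := [pred n : 'I_#|X|.+1 | [exists t : n.-tuple X,
           path (fun a b : X => (a < b)%O) x t && (last x t == y)]].
have : (0 < #|P|)%N.
  apply/card_gt0P.
  case: (eqVneq x y) => [exy|hne].
    exists ord0; rewrite /P inE; apply/existsP; exists [tuple]; by rewrite /= exy eqxx.
  have h1 : (1 < #|X|.+1)%N by rewrite ltnS; apply/card_gt0P; exists x.
  exists (Ordinal h1); rewrite /P inE; apply/existsP; exists [tuple y].
  by rewrite /= eqxx andbT lt_neqAle hne hxy.
move/(eq_bigmax_cond (fun n : 'I_#|X|.+1 => nat_of_ord n)) => [i0 Pi0 hmax].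
rewrite inE in Pi0; case/existsP: Pi0 => t /andP[hp /eqP hl].
exists t; split => //; rewrite size_tuple.
have -> : ilen x y = \max_(i in P) i by apply: eq_bigl => n; rewrite inE.
by rewrite hmax.
Qed.

Lemma ilen_mono d (X : finPOrderType d) (u x y v : X) :
  (u <= x)%O -> (x <= y)%O -> (y <= v)%O -> (u, v) != (x, y) ->
  (ilen x y < ilen u v)%N.
Proof.
move=> hux hxy hyv hne.
have [t [hp hl hs]] := ilen_wit hxy.
set s1 := if (u < x)%O then x :: t else t.
set s := s1 ++ (if (y < v)%O then [:: v] else [::]).
have hp1 : path (fun a b : X => (a < b)%O) u s1 /\ last u s1 = y.
  rewrite /s1; case: ifP => h /=; first by rewrite h hp hl.
  by have /eqP -> : u == x by move: hux; rewrite le_eqVlt h orbF.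
have hps : path (fun a b : X => (a < b)%O) u s /\ last u s = v.
  case: hp1 => hp1 hl1; rewrite /s cat_path last_cat hp1 hl1 /=.
  case: ifP => h /=; first by rewrite h.
  by split => //; move: hyv; rewrite le_eqVlt h orbF => /eqP.
case: hps => hps hls.
have hsz : (size s < #|X|.+1)%N.
  have hu : uniq (u :: s) by apply: (sorted_uniq lt_trans ltxx).
  rewrite ltnS; apply: leq_trans (max_card (mem (u :: s))).
  by rewrite (card_uniqP hu) /= leqnSn.
have hge : (size s <= ilen u v)%N.
  have := @leq_bigmax_cond _ (fun n : 'I_#|X|.+1 => [exists t : n.-tuple X,
           path (fun a b : X => (a < b)%O) u t && (last u t == v)]) (fun n => nat_of_ord n) (Ordinal hsz).
  apply; apply/existsP; exists (in_tuple s); by rewrite /= hps hls eqxx.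
apply: leq_trans hge.
rewrite /s size_cat /s1 -hs.
case h1: (u < x)%O; case h2: (y < v)%O => /=; rewrite ?addn0 ?addn1 ?ltnS ?leqnn //.
have /eqP eux : u == x by move: hux; rewrite le_eqVlt h1 orbF.
have /eqP eyv : y == v by move: hyv; rewrite le_eqVlt h2 orbF.
by move: hne; rewrite eux eyv eqxx.
Qed.

Local Open Scope ring_scope.

Lemma sum_if1 (T : finType) (K : fieldType) (v : T) (F : T -> K) :
  \sum_t (if t == v then F t else 0) = F v.
Proof. by rewrite -big_mkcond big_pred1_eq. Qed.

Lemma incid_eI d (X : finPOrderType d) (K : fieldType) (u v : X) :
  (u <= v)%O -> incid (eI K u v).
Proof.
move=> huv x y h; rewrite ffunE; case: eqP => // -[ex ey].
by move: h; rewrite ex ey huv.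
Qed.

Lemma conv_eI_r d (X : finPOrderType d) (K : fieldType) (f : IFun X K) (u v a b : X) :
  incid f -> (u <= v)%O -> conv f (eI K u v) (a, b) = if b == v then f (a, u) else 0.
Proof.
move=> hf huv; have he := incid_eI K huv; rewrite convE //=.
rewrite (eq_bigr (fun t => if t == u then (if b == v then f (a, u) else 0) else 0)).
  by rewrite sum_if1.
move=> t _; rewrite ffunE xpair_eqE.
by case: eqP => [->|]; case: eqP; rewrite ?mulr1 ?mulr0.
Qed.

Lemma conv_eI_l d (X : finPOrderType d) (K : fieldType) (h : IFun X K) (u v a b : X) :
  incid h -> (u <= v)%O -> conv (eI K u v) h (a, b) = if a == u then h (v, b) else 0.
Proof.
move=> hh huv; have he := incid_eI K huv; rewrite convE //=.
rewrite (eq_bigr (fun t => if t == v then (if a == u then h (v, b) else 0) else 0)).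
  by rewrite sum_if1.
move=> t _; rewrite ffunE xpair_eqE.
by case: (a =P u) => [ea|na]; case: (t =P v) => [et|nt]; rewrite ?et /= ?mul1r ?mul0r.
Qed.

Lemma conv_diag d (X : finPOrderType d) (K : fieldType) (f g : IFun X K) (x : X) :
  conv f g (x, x) = f (x, x) * g (x, x).
Proof.
rewrite ffunE /=.
rewrite (eq_bigl (fun t => t == x)) ?big_pred1_eq // => t.
by rewrite /leI eq_le andbC.
Qed.

Lemma Mx_inv d (X : finPOrderType d) (K : fieldType) (b c : IFun X K) :
  incid b -> incid c -> conv b c = idI X K -> Mx b *m Mx c = 1%:M.
Proof. by move=> hb hc e; rewrite -Mx_conv // e Mx_id. Qed.

Lemma dir2 d (X : finPOrderType d) (K : fieldType) (phi : IFun X K -> IFun X K) :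
  Inn1 phi -> LAut phi /\ (forall f : IFun X K, incid f -> tilde phi f = f).
Proof.
case=> beta [binv [hb hbi hdiag [hbb' hb'b] hphi]].
set B := Mx beta; set C := Mx binv.
have hBC : B *m C = 1%:M by apply: Mx_inv.
have hCB : C *m B = 1%:M by apply: Mx_inv.
have hM : forall f, incid f -> Mx (phi f) = B *m Mx f *m C.
  by move=> f hf; rewrite hphi // !Mx_conv //; apply: incid_conv.
split.
  split.
  - by move=> f hf; rewrite hphi //; apply: incid_conv.
  - move=> a f g hf hg; apply: Mx_inj; rewrite hM; last exact: incid_lin.
    rewrite !Mx_lin !hM //.
    by rewrite mulmxDr mulmxDl -scalemxAr -scalemxAl.
  - move=> f g hf hg /(congr1 (@Mx _ _ _)); rewrite !hM // => H; apply: Mx_inj.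
    move/(congr1 (fun A => C *m A *m B)): H => /=.
    by rewrite !mulmxA !hCB !mul1mx -!mulmxA !hCB !mulmx1.
  - move=> g hg; exists (conv (conv binv g) beta); first exact: incid_conv.
    apply: Mx_inj; rewrite hM; last exact: incid_conv.
    rewrite !Mx_conv //; last exact: incid_conv.
    by rewrite -/B -/C !mulmxA hBC mul1mx -!mulmxA hBC mulmx1.
  - move=> f g hf hg; apply: Mx_inj.
    rewrite hM; last exact: incid_lie.
    rewrite !Mx_lie //; try (apply: incid_conv || rewrite hphi //; apply: incid_conv).
    rewrite !hM //.
    rewrite mulmxBr mulmxBl.
    have e : forall F G, B *m F *m C *m (B *m G *m C) = B *m (F *m G) *m C.
      by move=> F G; rewrite -!mulmxA (mulmxA C) hCB mul1mx.
    by rewrite !e.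
have hbid : forall x, binv (x, x) = 1.
  move=> x; have := conv_diag beta binv x; rewrite hbb' hdiag mul1r ffunE /= eqxx.
  by move=> <-.
move=> f hf; apply/ffunP => -[a b]; rewrite ffunE.
have hc : forall p : X * X, leI p.1 p.2 ->
    compL (ilen p.1 p.2) (phi (eI K p.1 p.2)) (a, b) = (p == (a, b))%:R.
  move=> [u v] /= huv; rewrite /leI in huv; rewrite ffunE /=.
  have he := incid_eI K huv.
  have -> : phi (eI K u v) (a, b) = beta (a, u) * binv (v, b).
    rewrite hphi // convE //=; last exact: incid_conv.
    rewrite (eq_bigr (fun s => if s == v then beta (a, u) * binv (s, b) else 0)).
      by rewrite sum_if1.
    by move=> s _; rewrite conv_eI_r //; case: eqP; rewrite ?mul0r.
  case: (eqVneq (u, v) (a, b)) => [e|ne].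
    case: e => <- <-; by rewrite /leI huv eqxx hdiag hbid mulr1.
  case: (boolP (a <= u)%O) => hau; last by rewrite (hb _ _ hau) mul0r if_same.
  case: (boolP (v <= b)%O) => hvb; last by rewrite (hbi _ _ hvb) mulr0 if_same.
  have ne' : (a, b) != (u, v) by rewrite eq_sym.
  by rewrite (gtn_eqF (ilen_mono hau huv hvb ne')) andbF.
rewrite (eq_bigr (fun p => f p * (p == (a, b))%:R)); last first.
  by move=> p hp; rewrite hc.
case: (boolP (leI a b)) => hab.
  rewrite (bigD1 (a, b)) //= eqxx mulr1 big1 ?addr0 // => p /andP[_ hpq].
  by rewrite (negbTE hpq) mulr0.
rewrite hf // big1 // => p hp; case: eqP => [e|_]; last by rewrite mulr0.
by move: hp; rewrite e /= (negbTE hab).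
Qed.

Definition islin d (X : finPOrderType d) (K : fieldType) (F : IFun X K -> IFun X K) :=
  forall (a : K) f g, incid f -> incid g ->
    F [ffun p => (a * f p + g p)%R] = [ffun p => (a * F f p + F g p)%R].

Lemma incid0 d (X : finPOrderType d) (K : fieldType) : incid (0 : IFun X K).
Proof. by move=> x y _; rewrite ffunE. Qed.

Lemma lin0 d (X : finPOrderType d) (K : fieldType) (F : IFun X K -> IFun X K) :
  islin F -> F 0 = 0.
Proof.
move=> hF; have := hF 1 0 0 (@incid0 _ _ _) (@incid0 _ _ _).
have -> : [ffun p => 1 * (0 : IFun X K) p + (0 : IFun X K) p] = 0.
  by apply/ffunP => p; rewrite !ffunE mul1r addr0.
move/ffunP => H; apply/ffunP => p; move: (H p); rewrite !ffunE mul1r.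
by move=> e; apply: (@addrI _ (F 0 p)); rewrite addr0 -e.
Qed.

Lemma linsc d (X : finPOrderType d) (K : fieldType) (F : IFun X K -> IFun X K) c f :
  islin F -> incid f -> F [ffun p => c * f p] = [ffun p => c * F f p].
Proof.
move=> hF hf; have := hF c f 0 hf (@incid0 _ _ _); rewrite (lin0 hF).
have -> : [ffun p => c * f p + (0 : IFun X K) p] = [ffun p => c * f p].
  by apply/ffunP => p; rewrite !ffunE addr0.
by move=> ->; apply/ffunP => p; rewrite !ffunE addr0.
Qed.

Lemma incid_add d (X : finPOrderType d) (K : fieldType) (f g : IFun X K) :
  incid f -> incid g -> incid (f + g).
Proof. by move=> hf hg x y h; rewrite ffunE hf // hg // addr0. Qed.

Definition bsum d (X : finPOrderType d) (K : fieldType) (r : seq (X * X)) (c : X * X -> K)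
  (F : X * X -> IFun X K) : IFun X K :=
  \sum_(p <- r) [ffun q => c p * F p q].

Lemma incid_bsum d (X : finPOrderType d) (K : fieldType) r c (F : X * X -> IFun X K) :
  (forall p, p \in r -> incid (F p)) -> incid (bsum r c F).
Proof.
rewrite /bsum; elim: r => [|p r IH] H; first by rewrite big_nil; apply: incid0.
rewrite big_cons; apply: incid_add.
  by move=> x y h; rewrite ffunE H ?mem_head ?mulr0 //.
by apply: IH => q hq; apply: H; rewrite inE hq orbT.
Qed.

Lemma lin_sum d (X : finPOrderType d) (K : fieldType) (F : IFun X K -> IFun X K) r c
  (G : X * X -> IFun X K) :
  islin F -> (forall p, p \in r -> incid (G p)) ->
  F (bsum r c G) = bsum r c (fun p => F (G p)).
Proof.
move=> hF; rewrite /bsum; elim: r => [|p r IH] H; first by rewrite !big_nil lin0.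
have H' : forall q, q \in r -> incid (G q) by move=> q hq; apply: H; rewrite inE hq orbT.
rewrite !big_cons.
have -> : [ffun q => c p * G p q] + \sum_(j <- r) [ffun q => c j * G j q] =
   [ffun q => c p * G p q + (\sum_(j <- r) [ffun q => c j * G j q]) q].
  by apply/ffunP => q; rewrite !ffunE.
rewrite hF; first last.
  exact: (@incid_bsum _ _ _ r c G H').
  by apply: H; rewrite mem_head.
by rewrite IH //; apply/ffunP => q; rewrite !ffunE.
Qed.

Definition ppairs d (X : finPOrderType d) : seq (X * X) :=
  enum (fun p : X * X => leI p.1 p.2).

Lemma ppairsP d (X : finPOrderType d) (p : X * X) : (p \in ppairs X) = leI p.1 p.2.
Proof. by rewrite /ppairs mem_enum. Qed.

Lemma decomp d (X : finPOrderType d) (K : fieldType) (g : IFun X K) :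
  incid g -> g = bsum (ppairs X) g (fun p => eI K p.1 p.2).
Proof.
move=> hg; apply/ffunP => -[a b]; rewrite /bsum sum_ffunE /ppairs big_enum /=.
rewrite (eq_bigr (fun p => g p * (p == (a, b))%:R)); last first.
  by move=> p _; rewrite !ffunE -surjective_pairing eq_sym; case: eqP; rewrite ?mulr0 ?mulr1.
case: (boolP (leI a b)) => hab.
  rewrite (bigD1 (a, b)) //= eqxx mulr1 big1 ?addr0 // => p /andP[_ hpq].
  by rewrite (negbTE hpq) mulr0.
rewrite hg // big1 // => p hp; case: eqP => [e|_]; last by rewrite mulr0.
by move: hp; rewrite e unfold_in /= (negbTE hab).
Qed.

Lemma lin_ext d (X : finPOrderType d) (K : fieldType) (F G : IFun X K -> IFun X K) :
  islin F -> islin G -> (forall u v : X, (u <= v)%O -> F (eI K u v) = G (eI K u v)) ->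
  forall g, incid g -> F g = G g.
Proof.
move=> hF hG hb g hg; rewrite (decomp hg).
have hI : forall p, p \in ppairs X -> incid (eI K p.1 p.2).
  by move=> p; rewrite ppairsP => h; apply: incid_eI.
rewrite !lin_sum //; rewrite /bsum; apply: eq_big_seq => p hp.
by rewrite ppairsP in hp; rewrite hb.
Qed.

Lemma conj_entry d (X : finPOrderType d) (K : fieldType) (beta binv : IFun X K) (u v a b : X) :
  incid beta -> incid binv -> (u <= v)%O ->
  conv (conv beta (eI K u v)) binv (a, b) = beta (a, u) * binv (v, b).
Proof.
move=> hb hbi huv; have he := incid_eI K huv.
rewrite convE //=; last exact: incid_conv.
rewrite (eq_bigr (fun s => if s == v then beta (a, u) * binv (s, b) else 0)).
  by rewrite sum_if1.
by move=> s _; rewrite conv_eI_r //; case: eqP; rewrite ?mul0r.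
Qed.

Lemma lie_e_g d (X : finPOrderType d) (K : fieldType) (h : IFun X K) (z a b : X) :
  incid h -> lie (eI K z z) h (a, b) =
    (if a == z then h (z, b) else 0) - (if b == z then h (a, z) else 0).
Proof. by move=> hh; rewrite /lie ffsubE conv_eI_l ?conv_eI_r. Qed.

Lemma lie_e_e d (X : finPOrderType d) (K : fieldType) (z u v : X) :
  (u <= v)%O -> u != v ->
  lie (eI K z z) (eI K u v) = [ffun p => ((z == u)%:R - (z == v)%:R) * eI K u v p].
Proof.
move=> huv nuv; apply/ffunP => -[a b]; rewrite lie_e_g; last exact: incid_eI.
rewrite !ffunE /= !xpair_eqE.
have nvu : v != u by rewrite eq_sym.
case: (a =P u) => [?|nau]; case: (b =P v) => [?|nbv];
  case: (z =P u) => [?|nzu]; case: (z =P v) => [?|nzv]; subst;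
  rewrite ?eqxx ?(negbTE nuv) ?(negbTE nvu) /= ?mul0r ?mul1r ?mulr1 ?mulr0 ?subr0 ?sub0r ?subrr ?if_same ?oppr0 //.
all: repeat (case: eqP => //= ?; subst); rewrite ?eqxx ?(negbTE nuv) ?(negbTE nvu) /= ?oppr0 ?addr0 //.
Qed.

Lemma Mx0 d (X : finPOrderType d) (K : fieldType) : Mx (0 : IFun X K) = 0.
Proof. by apply/matrixP => i j; rewrite !mxE ffunE. Qed.

Lemma Mx_sc d (X : finPOrderType d) (K : fieldType) (c : K) (f : IFun X K) :
  Mx [ffun p => c * f p] = c *: Mx f.
Proof. by apply/matrixP => i j; rewrite !mxE ffunE. Qed.

Lemma incid_subf d (X : finPOrderType d) (K : fieldType) (f g : IFun X K) :
  incid f -> incid g -> incid (f - g).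
Proof. by move=> hf hg x y h; rewrite ffsubE hf // hg // subrr. Qed.

Lemma comm_prod (K : fieldType) n (A Z W : 'M[K]_n) :
  A *m Z = Z *m A -> A *m W = W *m A -> A *m (Z *m W) = Z *m W *m A.
Proof. by move=> h1 h2; rewrite mulmxA h1 -mulmxA h2 mulmxA. Qed.

Lemma dir1 d (X : finPOrderType d) (K : fieldType) (phi : IFun X K -> IFun X K) :
  LAut phi -> (forall f : IFun X K, incid f -> tilde phi f = f) -> Inn1 phi.
Proof.
case=> hinc hlin hinj hsurj hlie ht.
have hF : islin phi := hlin.
have ht_e : forall (u v : X) q, (u <= v)%O ->
    compL (ilen u v) (phi (eI K u v)) q = eI K u v q.
  move=> u v q huv; have := congr1 (fun F : IFun X K => F q) (ht _ (incid_eI K huv)).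
  rewrite /= ffunE => <-.
  rewrite (bigD1 (u, v)) //= big1 ?addr0.
    by rewrite [eI K u v (u, v)]ffunE eqxx mul1r.
  move=> p /andP[_ hp]; rewrite [eI K u v p]ffunE (negbTE hp) mul0r //.
have ht1 : forall u v : X, (u <= v)%O -> phi (eI K u v) (u, v) = 1.
  move=> u v huv; have := ht_e u v (u, v) huv.
  by rewrite !ffunE /= /leI huv !eqxx /= => ->.
have htd : forall z w : X, phi (eI K z z) (w, w) = (z == w)%:R.
  move=> z w; have := ht_e z z (w, w) (lexx z).
  rewrite !ffunE /= !ilen_diag /leI lexx eqxx /= => ->.
  by rewrite xpair_eqE andbb eq_sym; case: eqP.
set fz := fun z => phi (eI K z z).
have hfz : forall z, incid (fz z) by move=> z; apply: hinc; apply: incid_eI.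
have hcomm : forall x z, lie (fz x) (fz z) = 0.
  move=> x z; rewrite -hlie; try exact: incid_eI.
  have -> : lie (eI K x x) (eI K z z) = 0.
    apply/ffunP => -[a b]; rewrite lie_e_g; last exact: incid_eI.
    rewrite !ffunE /= !xpair_eqE.
    case: (x =P z) => [<-|nxz].
      by rewrite /=; case: (a == x); case: (b == x); rewrite ?subrr.
    by rewrite /= !andbF !if_same subrr.
  exact: lin0.
have hcent : forall h, incid h -> (forall x, lie (fz x) h = 0) ->
    (forall w, h (w, w) = 0) -> h = 0.
  move=> h hh hc hd; case: (hsurj h hh) => k hk ek.
  have hk0 : forall x, lie (eI K x x) k = 0.
    move=> x; apply: hinj; [exact: incid_lie | exact: incid0 |].
    rewrite hlie; [|exact: incid_eI|done].
    by rewrite ek hc lin0.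
  have hoff : forall a b, a != b -> k (a, b) = 0.
    move=> a b nab; move/ffunP: (hk0 a) => /(_ (a, b)).
    have nba : b != a by rewrite eq_sym.
    by rewrite lie_e_g // eqxx (negbTE nba) ffunE subr0.
  have hkw : forall w, h (w, w) = k (w, w).
    move=> w; rewrite -ek {1}(decomp hk) lin_sum //; last first.
      by move=> p; rewrite ppairsP => hp; apply: incid_eI.
    rewrite /bsum sum_ffunE /ppairs big_enum /=.
    rewrite (bigD1 (w, w)) /=; last by rewrite unfold_in /= /leI lexx.
    rewrite big1 ?addr0; first by rewrite ffunE /= htd eqxx mulr1.
    move=> [a b] /andP[_ hp]; rewrite ffunE /=.
    case: (eqVneq a b) => [eab|nab]; last by rewrite hoff // mul0r.
    subst b; rewrite htd; case: (a =P w) => [eaw|]; last by rewrite mulr0.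
    by move: hp; rewrite eaw eqxx.
  have k0 : k = 0.
    apply/ffunP => -[a b]; rewrite ffunE; case: (eqVneq a b) => [<-|nab].
      by rewrite -hkw hd.
    exact: hoff.
  by rewrite -ek k0 lin0.
have hMc : forall x z, Mx (fz x) *m Mx (fz z) = Mx (fz z) *m Mx (fz x).
  move=> x z; have := congr1 (@Mx _ _ _) (hcomm x z).
  by rewrite Mx_lie // Mx0 => /eqP; rewrite subr_eq0 => /eqP.
have horth : forall z w, conv (fz z) (fz w) = if z == w then fz z else 0.
  move=> z w; apply/eqP; rewrite -subr_eq0; apply/eqP.
  have hi : incid (if z == w then fz z else 0).
    by case: eqP => _; [exact: hfz | exact: incid0].
  have hh : incid (conv (fz z) (fz w) - (if z == w then fz z else 0)).
    by apply: incid_subf => //; exact: incid_conv.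
  apply: hcent.
  - exact: hh.
  - move=> x; apply: Mx_inj; rewrite (Mx_lie (hfz x) hh).
    rewrite Mx_sub (Mx_conv (hfz z) (hfz w)) Mx0.
    have e1 := comm_prod (hMc x z) (hMc x w).
    have e2 : Mx (fz x) *m Mx (if z == w then fz z else 0) =
              Mx (if z == w then fz z else 0) *m Mx (fz x).
      by case: eqP => _; [rewrite hMc | rewrite Mx0 mulmx0 mul0mx].
    by rewrite mulmxBr mulmxBl e1 e2 subrr.
  - move=> v; rewrite ffsubE conv_diag /fz !htd.
    case: (z =P w) => [<-|nzw]; first by rewrite htd; case: (z == v); rewrite ?mulr1 ?mulr0 subrr.
    rewrite ffunE subr0; case: (z =P v) => [ezv|]; last by rewrite mul0r.
    case: (w =P v) => [ewv|]; last by rewrite mulr0.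
    by case: nzw; rewrite ezv ewv.
pose beta : IFun X K := [ffun p => fz p.2 p].
pose binv : IFun X K := [ffun p => fz p.1 p].
have hb : incid beta by move=> x y h; rewrite ffunE /= (hfz y x y h).
have hbi : incid binv by move=> x y h; rewrite ffunE /= (hfz x x y h).
have hdiag : forall x, beta (x, x) = 1 by move=> x; rewrite ffunE /= /fz htd eqxx.
have hdiag' : forall x, binv (x, x) = 1 by move=> x; rewrite ffunE /= /fz htd eqxx.
have hb'b : conv binv beta = idI X K.
  apply/ffunP => -[u v]; rewrite (convE _ hbi hb) /=.
  transitivity (conv (fz u) (fz v) (u, v)).
    by rewrite (convE _ (hfz u) (hfz v)); apply: eq_bigr => t _; rewrite !ffunE.
  rewrite horth [idI X K _]ffunE /=; case: (u =P v) => [<-|_]; first by rewrite /fz htd eqxx.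
  by rewrite ffunE.
have hbb' : conv beta binv = idI X K.
  apply: Mx_inj; rewrite (Mx_conv hb hbi) Mx_id; apply: mulmx1C.
  by rewrite -(Mx_conv hbi hb) hb'b Mx_id.
have hfb : forall x, conv (fz x) beta = conv beta (eI K x x).
  move=> x; apply/ffunP => -[u v]; rewrite (convE _ (hfz x) hb) conv_eI_r //=.
  transitivity (conv (fz x) (fz v) (u, v)).
    by rewrite (convE _ (hfz x) (hfz v)); apply: eq_bigr => t _; rewrite !ffunE.
  rewrite horth; case: (x =P v) => [<-|nxv]; first by rewrite eqxx ffunE.
  by rewrite ffunE (introF eqP (fun e => nxv (esym e))).
set B := Mx beta; set C := Mx binv.
have hBC : B *m C = 1%:M by apply: Mx_inv.
have hCB : C *m B = 1%:M by apply: Mx_inv.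
have hFB : forall x, Mx (fz x) *m B = B *m Mx (eI K x x).
  by move=> x; rewrite -(Mx_conv (hfz x) hb) -(Mx_conv hb (incid_eI K (lexx x))) hfb.
have hFx : forall x, Mx (fz x) = B *m Mx (eI K x x) *m C.
  by move=> x; rewrite -hFB -mulmxA hBC mulmx1.
have hEC : forall x, Mx (eI K x x) *m C = C *m Mx (fz x).
  by move=> x; rewrite hFx !mulmxA hCB mul1mx.
set G := fun f => conv (conv beta f) binv.
have hInn : Inn1 G by exists beta, binv; split.
have [[_ hGl _ _ _] _] := dir2 hInn.
exists beta, binv; split => //.
apply: (lin_ext hF hGl) => u v huv.
have he := incid_eI K huv.
case: (eqVneq u v) => [euv|nuv].
  subst v; apply: Mx_inj; rewrite /G (Mx_conv (incid_conv _ _) hbi) (Mx_conv hb he).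
  exact: hFx.
set g := phi (eI K u v).
have hg : incid g by apply: hinc.
set psi := conv (conv binv g) beta.
have hpsi : incid psi by apply: incid_conv.
have hgG : g = G psi.
  apply: Mx_inj; rewrite /G /psi (Mx_conv (incid_conv _ _) hbi) (Mx_conv hb hpsi).
  rewrite (Mx_conv (incid_conv _ _) hb) (Mx_conv hbi hg) -/B -/C.
  by rewrite !mulmxA hBC mul1mx -!mulmxA hBC mulmx1.
have hlg : forall z, lie (fz z) g = [ffun p => ((z == u)%:R - (z == v)%:R) * g p].
  move=> z; rewrite -hlie; [|exact: incid_eI|exact: he].
  by rewrite lie_e_e // linsc.
have hlp : forall z, lie (eI K z z) psi = [ffun p => ((z == u)%:R - (z == v)%:R) * psi p].
  move=> z; apply: Mx_inj; rewrite (Mx_lie (incid_eI K (lexx z)) hpsi) Mx_sc.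
  have := congr1 (@Mx _ _ _) (hlg z); rewrite (Mx_lie (hfz z) hg) Mx_sc => H.
  rewrite /psi (Mx_conv (incid_conv _ _) hb) (Mx_conv hbi hg) -/B -/C.
  rewrite scalemxAl scalemxAr -H mulmxBr mulmxBl !mulmxA hEC.
  have hBE : B *m Mx (eI K z z) = Mx (fz z) *m B by rewrite hFB.
  by rewrite -[C *m Mx g *m B *m _]mulmxA hBE !mulmxA.
have nvu : v != u by rewrite eq_sym.
clearbody psi.
have hpe : psi = [ffun p => psi (u, v) * eI K u v p].
  apply/ffunP => -[a b]; rewrite !ffunE /= xpair_eqE.
  have hu := congr1 (fun F : IFun X K => F (a, b)) (hlp u).
  have hv := congr1 (fun F : IFun X K => F (a, b)) (hlp v).
  move: hu hv; rewrite /= !lie_e_g // !ffunE eqxx (negbTE nuv) (negbTE nvu) !eqxx /= ?mulr1n ?mulr0n subr0 sub0r mul1r mulN1r.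
  case: (a =P u) => [ea|na].
    subst a; rewrite (negbTE nuv) sub0r.
    case: (b =P v) => [eb|nb]; first by subst b; rewrite mulr1.
    by move=> _ /eqP; rewrite oppr0 eq_sym oppr_eq0 /= mulr0 => /eqP.
  rewrite sub0r; case: (b =P u) => [eb|nb]; last by rewrite oppr0 mulr0 => <-.
  subst b; rewrite (negbTE nuv) subr0 /= mulr0 => _.
  case: (a =P v) => [ea|_]; last by move/eqP; rewrite eq_sym oppr_eq0 => /eqP.
  subst a; move=> _; apply: hpsi; apply/negP => hvu; move: nuv.
  by rewrite eq_le huv hvu.
have hc1 : psi (u, v) = 1.
  have h1 := ht1 u v huv; rewrite -/g hgG {1}hpe (linsc _ hGl he) ffunE in h1.
  by move: h1; rewrite /G conj_entry // hdiag hdiag' mulr1 mulr1.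
rewrite hgG {1}hpe hc1.
by have -> : [ffun p => 1 * eI K u v p] = eI K u v by apply/ffunP => p; rewrite ffunE mul1r.
Qed.

Theorem proposition4p14 (d : Order.disp_t) (X : finPOrderType d) (K : fieldType) :
  connected_poset X ->
  forall phi : IFun X K -> IFun X K,
    (LAut phi /\ (forall f : IFun X K, incid f -> tilde phi f = f)) <-> Inn1 phi.
Proof.
move=> _ phi; split; first by case=> h1 h2; apply: dir1.
exact: dir2.
Qed.
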